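(* Let $P$ be an orthogonal polygon without holes, let $\eta\in\mathbb{N}$, and let $S$ be a maximal square of $P$ with side length $d$ such that: the top and bottom sides of $S$ overlap with horizontal edges $e_1$ and $e_2$ of $P$ respectively; $e_1$ contains the top-right corner of $S$; $e_2$ contains the bottom-right corner of $S$; and there is a strip $Y$ between $e_1$ and $e_2$ whose right side is at distance more than $\eta d$ from the right side of $S$. Let $R$ be the rec-pack of width $d$ and strength $\eta$ whose vertical sides have length $d$ and horizontal sides have length $\eta d$, and whose left side coincides with the right side of $S$. If $\mathcal{R}$ is a partial solution with $S\in\mathcal{R}$ such that $R$ does not overlap any rec-pack in $\mathcal{R}$, then $\mathcal{R}\cup\{R\}$ is also a partial solution.
   Context: $P$ is a simple polygon with integer vertex coordinates and axis-parallel edges. A valid square is an axis-parallel square contained in $P$; it is maximal if no larger-area valid square contains it. A strip of $P$ is a maximal axis-parallel non-square rectangular region inside $P$ each of whose two longer sides is completely contained in an edge of $P$. A rec-pack is an axis-parallel rectangle contained in $P$ of dimensions $t\times \eta t$ or $\eta t\times t$ with $\eta\in\mathbb{N}$ ($t$ is its width, $\eta$ its strength); every valid square is a rec-pack; its extraction $\mathsf{ext}(R)$ is the set of the $\eta$ side-$t$ squares tiling $R$. A set $\mathcal{R}'$ of rec-packs is a minimum covering of $P$ if $\bigcup_{R\in\mathcal{R}'}\mathsf{ext}(R)$ is a minimum-cardinality set of valid squares with union $P$ and distinct rec-packs have disjoint extractions. A partial solution is a set of rec-packs contained in some minimum covering. *)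

(* Defs.v *)
From Stdlib Require Import Reals ZArith List Arith.
Import ListNotations.
Open Scope R_scope.

(* A polygon is given by its cyclic list of integer vertices. *)
Definition vertex := (Z * Z)%type.
Definition edge := (vertex * vertex)%type.
Definition point := (R * R)%type.

Definition vx (v : vertex) : R := IZR (fst v).
Definition vy (v : vertex) : R := IZR (snd v).

Definition edges (P : list vertex) : list edge :=
  match P with
  | [] => []
  | v :: t => combine P (t ++ [v])
  end.

Definition e_horizontal (e : edge) : Prop := snd (fst e) = snd (snd e).
Definition e_vertical (e : edge) : Prop := fst (fst e) = fst (snd e).

(* closed segment of an axis-parallel edge *)
Definition on_edge (e : edge) (p : point) : Prop :=
  Rmin (vx (fst e)) (vx (snd e)) <= fst p <= Rmax (vx (fst e)) (vx (snd e)) /\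
  Rmin (vy (fst e)) (vy (snd e)) <= snd p <= Rmax (vy (fst e)) (vy (snd e)).

Definition dummy_edge : edge := ((0%Z, 0%Z), (0%Z, 0%Z)).
Definition dummy_vertex : vertex := (0%Z, 0%Z).

(* Simple orthogonal polygon: at least 4 vertices, every edge is nondegenerate
   and axis-parallel, consecutive edges alternate between horizontal and
   vertical, consecutive edges meet only at their common vertex and
   non-consecutive edges are disjoint.  (A simple polygon has no holes.) *)
Definition ortho_polygon (P : list vertex) : Prop :=
  let n := length P in
  let E := edges P in
  (4 <= n)%nat /\
  (forall i, (i < n)%nat ->
     let e := nth i E dummy_edge in
     let e' := nth ((S i) mod n) E dummy_edge in
     fst e <> snd e /\
     ((e_horizontal e /\ e_vertical e') \/ (e_vertical e /\ e_horizontal e'))) /\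
  (forall i j p, (i < n)%nat -> (j < n)%nat -> i <> j ->
     on_edge (nth i E dummy_edge) p -> on_edge (nth j E dummy_edge) p ->
     (j = (S i) mod n /\ p = (vx (nth j P dummy_vertex), vy (nth j P dummy_vertex)))
     \/ (i = (S j) mod n /\ p = (vx (nth i P dummy_vertex), vy (nth i P dummy_vertex)))).

(* ray-casting (half-open rule): vertical edges strictly to the right of p
   whose y-range [ymin, ymax) contains p.y *)
Definition crosses (p : point) (e : edge) : bool :=
  if Z.eq_dec (fst (fst e)) (fst (snd e)) then
    if Rlt_dec (fst p) (vx (fst e)) then
      if Rle_dec (Rmin (vy (fst e)) (vy (snd e))) (snd p) then
        if Rlt_dec (snd p) (Rmax (vy (fst e)) (vy (snd e))) then true else false
      else false
    else false
  else false.

(* The closed region of P: its boundary together with its interior. *)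
Definition inP (P : list vertex) (p : point) : Prop :=
  (exists e, In e (edges P) /\ on_edge e p) \/
  Nat.odd (length (filter (crosses p) (edges P))) = true.

(* lower-left corner (rx, ry), width rw, height rh *)
Record rect := Rect { rx : R; ry : R; rw : R; rh : R }.

Definition in_rect (X : rect) (p : point) : Prop :=
  rx X <= fst p <= rx X + rw X /\ ry X <= snd p <= ry X + rh X.

Definition in_rect_interior (X : rect) (p : point) : Prop :=
  rx X < fst p < rx X + rw X /\ ry X < snd p < ry X + rh X.

Definition rect_sub (X Y : rect) : Prop := forall p, in_rect X p -> in_rect Y p.

Definition overlap (X Y : rect) : Prop :=
  exists p, in_rect_interior X p /\ in_rect_interior Y p.

Definition valid_rect (P : list vertex) (X : rect) : Prop :=
  0 < rw X /\ 0 < rh X /\ forall p, in_rect X p -> inP P p.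

Definition is_square (X : rect) : Prop := rw X = rh X.

Definition valid_square (P : list vertex) (X : rect) : Prop :=
  valid_rect P X /\ is_square X.

Definition maximal_square (P : list vertex) (X : rect) : Prop :=
  valid_square P X /\
  forall Y, valid_square P Y -> rect_sub X Y -> ~ (rw X * rh X < rw Y * rh Y).

Definition hseg_in_edge (xl xr y : R) (e : edge) : Prop :=
  forall x, xl <= x <= xr -> on_edge e (x, y).
Definition vseg_in_edge (x yl yr : R) (e : edge) : Prop :=
  forall y, yl <= y <= yr -> on_edge e (x, y).

Definition strip_candidate (P : list vertex) (Y : rect) : Prop :=
  valid_rect P Y /\ ~ is_square Y /\
  ((rh Y < rw Y /\
    (exists e, In e (edges P) /\ hseg_in_edge (rx Y) (rx Y + rw Y) (ry Y + rh Y) e) /\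
    (exists e, In e (edges P) /\ hseg_in_edge (rx Y) (rx Y + rw Y) (ry Y) e))
   \/
   (rw Y < rh Y /\
    (exists e, In e (edges P) /\ vseg_in_edge (rx Y) (ry Y) (ry Y + rh Y) e) /\
    (exists e, In e (edges P) /\ vseg_in_edge (rx Y + rw Y) (ry Y) (ry Y + rh Y) e))).

Definition is_strip (P : list vertex) (Y : rect) : Prop :=
  strip_candidate P Y /\
  forall Y', strip_candidate P Y' -> rect_sub Y Y' -> Y' = Y.

Definition rec_pack (P : list vertex) (X : rect) : Prop :=
  valid_rect P X /\
  exists k : nat, (1 <= k)%nat /\ (rw X = INR k * rh X \/ rh X = INR k * rw X).

(* width t = min side; extraction = the side-t squares tiling X *)
Definition ext (X : rect) (sq : rect) : Prop :=
  let t := Rmin (rw X) (rh X) in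
  rw sq = t /\ rh sq = t /\
  exists i : nat,
    (rh X <= rw X /\ INR i * t < rw X /\ rx sq = rx X + INR i * t /\ ry sq = ry X)
    \/ (rw X < rh X /\ INR i * t < rh X /\ rx sq = rx X /\ ry sq = ry X + INR i * t).

Definition covers (P : list vertex) (U : rect -> Prop) : Prop :=
  (forall sq, U sq -> valid_square P sq) /\
  (forall p, inP P p <-> exists sq, U sq /\ in_rect sq p).

Definition min_square_cover (P : list vertex) (U : rect -> Prop) : Prop :=
  covers P U /\
  exists L : list rect, NoDup L /\ (forall sq, In sq L <-> U sq) /\
    forall L' : list rect, NoDup L' -> covers P (fun sq => In sq L') ->
      (length L <= length L')%nat.

Definition min_covering (P : list vertex) (M : rect -> Prop) : Prop :=
  (forall X, M X -> rec_pack P X) /\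
  (forall X Y sq, M X -> M Y -> X <> Y -> ext X sq -> ext Y sq -> False) /\
  min_square_cover P (fun sq => exists X, M X /\ ext X sq).

Definition partial_solution (P : list vertex) (Rs : rect -> Prop) : Prop :=
  exists M, min_covering P M /\ forall X, Rs X -> M X.

Definition right_pack (S : rect) (eta : nat) : rect :=
  Rect (rx S + rw S) (ry S) (INR eta * rw S) (rw S).

Definition hseg_overlaps_edge (xl xr y : R) (e : edge) : Prop :=
  exists a b, a < b /\ forall x, a <= x <= b -> xl <= x <= xr /\ on_edge e (x, y).

(* Main.v *)
Require Import Defs.
From Stdlib Require Import Reals ZArith List Arith Lra Lia Classical.
Import ListNotations.
Open Scope R_scope.


Definition nonint (x : R) := forall z : Z, x <> IZR z.

Lemma nonint_between (z : Z) (x : R) : IZR z < x < IZR z + 1 -> nonint x.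
Proof.
  intros [H1 H2] w Hw. subst x.
  apply lt_IZR in H1. rewrite <- plus_IZR in H2. apply lt_IZR in H2. lia.
Qed.

Lemma nonint_exists (a b : R) : a < b -> exists x, a < x < b /\ nonint x.
Proof.
  intros Hab.
  destruct (classic (exists z, (a+b)/2 = IZR z)) as [[z Hz]|Hn].
  - exists ((a+b)/2 + Rmin ((b-a)/4) (1/2)).
    assert (0 < Rmin ((b-a)/4) (1/2)) by (apply Rmin_glb_lt; lra).
    assert (Rmin ((b-a)/4) (1/2) <= (b-a)/4) by apply Rmin_l.
    assert (Rmin ((b-a)/4) (1/2) <= 1/2) by apply Rmin_r.
    split. lra. apply (nonint_between z). lra.
  - exists ((a+b)/2). split. lra. intros z Hz. apply Hn. eauto.
Qed.

Lemma zle_plus (m Y : Z) (e : R) : 0 < e < 1 -> (IZR m <= IZR Y + e <-> (m <= Y)%Z).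
Proof.
  intros He; split; intros H.
  - destruct (Z_le_gt_dec m Y) as [|Hg]; [assumption|].
    assert (IZR (Y+1) <= IZR m) by (apply IZR_le; lia). rewrite plus_IZR in H0. lra.
  - apply IZR_le in H. lra.
Qed.

Lemma zlt_plus (Y M : Z) (e : R) : 0 < e < 1 -> (IZR Y + e < IZR M <-> (Y < M)%Z).
Proof.
  intros He; split; intros H.
  - destruct (Z_lt_ge_dec Y M) as [|Hg]; [assumption|].
    assert (IZR M <= IZR Y) by (apply IZR_le; lia). lra.
  - assert (IZR (Y+1) <= IZR M) by (apply IZR_le; lia). rewrite plus_IZR in H0. lra.
Qed.

Lemma zle_minus (m Y : Z) (e : R) : 0 < e < 1 -> (IZR m <= IZR Y - e <-> (m < Y)%Z).
Proof.
  intros He; split; intros H.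
  - destruct (Z_lt_ge_dec m Y) as [|Hg]; [assumption|].
    assert (IZR Y <= IZR m) by (apply IZR_le; lia). lra.
  - assert (IZR (m+1) <= IZR Y) by (apply IZR_le; lia). rewrite plus_IZR in H0. lra.
Qed.

Lemma zlt_minus (Y M : Z) (e : R) : 0 < e < 1 -> (IZR Y - e < IZR M <-> (Y <= M)%Z).
Proof.
  intros He; split; intros H.
  - destruct (Z_le_gt_dec Y M) as [|Hg]; [assumption|].
    assert (IZR (M+1) <= IZR Y) by (apply IZR_le; lia). rewrite plus_IZR in H0. lra.
  - apply IZR_le in H. lra.
Qed.

Lemma Rmin_IZR a b : Rmin (IZR a) (IZR b) = IZR (Z.min a b).
Proof.
  unfold Rmin. destruct (Rle_dec (IZR a) (IZR b)) as [H|H].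
  - apply le_IZR in H. rewrite Z.min_l; auto.
  - assert (b < a)%Z by (apply lt_IZR; lra). rewrite Z.min_r; auto; lia.
Qed.

Lemma Rmax_IZR a b : Rmax (IZR a) (IZR b) = IZR (Z.max a b).
Proof.
  unfold Rmax. destruct (Rle_dec (IZR a) (IZR b)) as [H|H].
  - apply le_IZR in H. rewrite Z.max_r; auto.
  - assert (b < a)%Z by (apply lt_IZR; lra). rewrite Z.max_l; auto; lia.
Qed.

Lemma between_min_max a b x : (a <= x <= b \/ b <= x <= a) -> Rmin a b <= x <= Rmax a b.
Proof. unfold Rmin, Rmax; destruct (Rle_dec a b); lra. Qed.

Lemma le_neq_lt a x : a <= x -> x <> a -> a < x.
Proof. intros H1 H2. destruct (Rle_lt_or_eq_dec a x H1); auto. congruence. Qed.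

Lemma edges_length P : length (edges P) = length P.
Proof.
  destruct P as [|v t]; [reflexivity|]. change (edges (v::t)) with (combine (v::t) (t ++ [v])).
  unfold edge. rewrite length_combine, length_app. simpl. rewrite Nat.add_1_r. simpl. rewrite Nat.min_id. reflexivity.
Qed.

Lemma edge_nth P i : (i < length P)%nat ->
  nth i (edges P) dummy_edge = (nth i P dummy_vertex, nth (S i mod length P) P dummy_vertex).
Proof.
  destruct P as [|v t]; [simpl; lia|]. intros Hi.
  change (edges (v::t)) with (combine (v::t) (t ++ [v])). change dummy_edge with (dummy_vertex, dummy_vertex).
  unfold edge. rewrite combine_nth by (simpl; rewrite length_app; simpl; lia).
  f_equal. simpl length in *.
  destruct (Nat.eq_dec i (length t)) as [->|Hne].
  - rewrite app_nth2 by lia. rewrite Nat.sub_diag, Nat.mod_same by lia. reflexivity.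
  - rewrite app_nth1 by lia. rewrite Nat.mod_small by lia. reflexivity.
Qed.

Lemma ortho_edge P e : ortho_polygon P -> In e (edges P) ->
  fst e <> snd e /\ (e_horizontal e \/ e_vertical e).
Proof.
  intros [_ [H2 _]] Hin.
  destruct (In_nth _ _ dummy_edge Hin) as [i [Hi Hei]].
  rewrite edges_length in Hi.
  specialize (H2 i Hi). cbv zeta in H2. rewrite Hei in H2.
  destruct H2 as [Hne Hor]. split; auto. destruct Hor as [[? ?]|[? ?]]; auto.
Qed.

Lemma hlevel e x y : e_horizontal e -> on_edge e (x,y) -> y = vy (fst e).
Proof.
  unfold e_horizontal, on_edge, vy. intros Hh [_ Hy]. simpl in Hy. rewrite Hh in *.
  rewrite Rmin_left, Rmax_left in Hy by lra. lra.
Qed.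

Lemma vlevel e x y : e_vertical e -> on_edge e (x,y) -> x = vx (fst e).
Proof.
  unfold e_vertical, on_edge, vx. intros Hh [Hx _]. simpl in Hx. rewrite Hh in *.
  rewrite Rmin_left, Rmax_left in Hx by lra. lra.
Qed.

Lemma touch_endpoint P i j p : ortho_polygon P -> (i < length P)%nat -> (j < length P)%nat -> i <> j ->
  on_edge (nth i (edges P) dummy_edge) p -> on_edge (nth j (edges P) dummy_edge) p ->
  p = (vx (fst (nth i (edges P) dummy_edge)), vy (fst (nth i (edges P) dummy_edge))) \/
  p = (vx (snd (nth i (edges P) dummy_edge)), vy (snd (nth i (edges P) dummy_edge))).
Proof.
  intros [_ [_ H3]] Hi Hj Hij H1 H2.
  rewrite (edge_nth P i Hi). simpl.
  destruct (H3 i j p Hi Hj Hij H1 H2) as [[-> Hp]|[Heq Hp]].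
  - right. exact Hp.
  - left. exact Hp.
Qed.

Lemma not_endpoint (u w : vertex) (p : point) :
  Rmin (vx u) (vx w) < fst p < Rmax (vx u) (vx w) ->
  p = (vx u, vy u) \/ p = (vx w, vy w) -> False.
Proof. intros H [->| ->]; simpl in H; unfold Rmin, Rmax in H; destruct (Rle_dec _ _); lra. Qed.

Lemma interior_touch P e i k p : ortho_polygon P -> nth i (edges P) dummy_edge = e -> (i < length P)%nat ->
  (k < length P)%nat -> i <> k -> on_edge e p -> on_edge (nth k (edges P) dummy_edge) p ->
  Rmin (vx (fst e)) (vx (snd e)) < fst p < Rmax (vx (fst e)) (vx (snd e)) -> False.
Proof.
  intros HP Hei Hi Hk Hik H1 H2 Hs. subst e.
  apply (not_endpoint _ _ p Hs). eapply touch_endpoint; eauto.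
Qed.

Lemma strict_of_nonint e x y : on_edge e (x,y) -> nonint x ->
  Rmin (vx (fst e)) (vx (snd e)) < x < Rmax (vx (fst e)) (vx (snd e)).
Proof.
  intros [Hx _] Hn. simpl in Hx.
  assert (H1 : x <> vx (fst e)) by apply Hn. assert (H2 : x <> vx (snd e)) by apply Hn.
  revert Hx. unfold Rmin, Rmax. destruct (Rle_dec _ _); intros Hx; split; apply le_neq_lt;
    try lra; try (intro Heq; apply H1; lra); try (intro Heq; apply H2; lra).
Qed.

Lemma no_touch P e1 k p : ortho_polygon P -> In e1 (edges P) -> e_horizontal e1 -> (k < length P)%nat ->
  e_vertical (nth k (edges P) dummy_edge) -> on_edge e1 p -> on_edge (nth k (edges P) dummy_edge) p ->
  Rmin (vx (fst e1)) (vx (snd e1)) < fst p < Rmax (vx (fst e1)) (vx (snd e1)) -> False.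
Proof.
  intros HP Hin Hh Hk Hv H1 H2 Hs.
  destruct (In_nth _ _ dummy_edge Hin) as [i [Hi Hei]]. rewrite edges_length in Hi.
  destruct (Nat.eq_dec i k) as [->|Hne].
  - rewrite Hei in Hv. destruct (ortho_edge P e1 HP Hin) as [Hne _].
    apply Hne. unfold e_horizontal, e_vertical in *.
    destruct (fst e1), (snd e1); simpl in *; congruence.
  - apply (interior_touch P e1 i k p HP Hei Hi Hk Hne H1 H2 Hs).
Qed.

Lemma on_edge_conv e x1 x2 t y : on_edge e (x1, y) -> on_edge e (x2, y) -> x1 <= t <= x2 -> on_edge e (t, y).
Proof. unfold on_edge; simpl. intros. lra. Qed.


Fixpoint sumF {A} (F : A -> nat) (l : list A) : nat :=
  match l with [] => 0%nat | a :: t => (F a + sumF F t)%nat end.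

Lemma sumF_add {A} (F G : A -> nat) l : sumF (fun a => F a + G a)%nat l = (sumF F l + sumF G l)%nat.
Proof. induction l; simpl; lia. Qed.

Lemma sumF_ext {A} (F G : A -> nat) l : (forall a, In a l -> F a = G a) -> sumF F l = sumF G l.
Proof.
  induction l as [|a t IH]; simpl; intros H; [reflexivity|].
  rewrite (H a (or_introl eq_refl)). rewrite IH; [reflexivity|]. intros b Hb; apply H; right; auto.
Qed.

Lemma sumF_even {A} (F : A -> nat) l : (forall a, In a l -> Nat.Even (F a)) -> Nat.Even (sumF F l).
Proof.
  induction l as [|a t IH]; simpl; intros H; [exists 0%nat; reflexivity|].
  destruct (H a (or_introl eq_refl)) as [k Hk]. destruct IH as [m Hm]; auto.
  exists (k+m)%nat; lia.
Qed.

Lemma sumF_filter {A} (f : A -> bool) l : sumF (fun a => if f a then 1 else 0)%nat l = length (filter f l).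
Proof. induction l; simpl; auto. destruct (f a); simpl; lia. Qed.

Lemma sumF_one_odd {A} (F : A -> nat) (l : list A) d i : (i < length l)%nat -> Nat.Odd (F (nth i l d)) ->
  (forall j, (j < length l)%nat -> j <> i -> Nat.Even (F (nth j l d))) -> Nat.Odd (sumF F l).
Proof.
  revert i. induction l as [|a t IH]; intros i Hi Ho He; simpl in *; [lia|].
  destruct i as [|i].
  - destruct Ho as [k Hk].
    assert (Nat.Even (sumF F t)) as [m Hm].
    { apply sumF_even. intros b Hb. destruct (In_nth _ _ d Hb) as [j [Hj Hbj]]. subst b.
      apply (He (S j)); lia. }
    exists (k+m)%nat; lia.
  - destruct (He 0%nat ltac:(lia) ltac:(lia)) as [k Hk].
    destruct (IH i ltac:(lia) Ho) as [m Hm].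
    { intros j Hj Hji. apply (He (S j)); lia. }
    exists (k+m)%nat; lia.
Qed.

Lemma sumF_app {A} (F : A -> nat) l1 l2 : sumF F (l1 ++ l2) = (sumF F l1 + sumF F l2)%nat.
Proof. induction l1; simpl; lia. Qed.

Lemma sum_endpoints_even (P : list vertex) (h : vertex -> nat) :
  Nat.Even (sumF (fun e : edge => h (fst e) + h (snd e))%nat (edges P)).
Proof.
  destruct P as [|v t]; [exists 0%nat; reflexivity|].
  change (edges (v::t)) with (combine (v::t) (t ++ [v])).
  assert (Hc : forall l1 l2 : list vertex, length l1 = length l2 ->
    sumF (fun e : edge => h (fst e) + h (snd e))%nat (combine l1 l2) = (sumF h l1 + sumF h l2)%nat).
  { induction l1; destruct l2; simpl; intros; try lia. rewrite IHl1 by lia. lia. }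
  rewrite Hc by (simpl; rewrite length_app; simpl; lia).
  rewrite sumF_app. simpl. exists (h v + sumF h t)%nat. lia.
Qed.

Lemma crosses_vert (x0 y : R) (k a b : Z) :
  crosses (x0, y) ((k,a),(k,b)) =
  if Rlt_dec x0 (IZR k) then
    (if Rle_dec (IZR (Z.min a b)) y then (if Rlt_dec y (IZR (Z.max a b)) then true else false) else false)
  else false.
Proof.
  unfold crosses, vx, vy; simpl. destruct (Z.eq_dec k k); [|congruence].
  rewrite Rmin_IZR, Rmax_IZR. reflexivity.
Qed.

Lemma hedge_parity P e x0 y eps :
  ortho_polygon P -> In e (edges P) -> e_horizontal e -> on_edge e (x0, y) -> nonint x0 -> 0 < eps < 1 ->
  inP P (x0, y + eps) -> inP P (x0, y - eps) -> False.
Proof.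
  intros HP Hin Hh Hon Hx0 He Ha Hb.
  assert (Hy : y = vy (fst e)) by (eapply hlevel; eauto).
  set (Y0 := snd (fst e)) in *.
  assert (Hy' : y = IZR Y0) by (rewrite Hy; reflexivity).
  clear Hy.
  set (E := edges P) in *.
  assert (Hoff : forall yy, (yy = y + eps \/ yy = y - eps) -> forall e', In e' E -> ~ on_edge e' (x0, yy)).
  { intros yy Hyy e' He'in Hon'.
    destruct (ortho_edge P e' HP He'in) as [Hne [Hh'|Hv']].
    - pose proof (hlevel _ _ _ Hh' Hon') as Hl. unfold vy in Hl.
      destruct Hyy as [->| ->]; rewrite Hy' in Hl.
      + apply (nonint_between Y0 (IZR Y0 + eps) ltac:(lra) (snd (fst e'))). exact Hl.
      + apply (nonint_between (Y0 - 1) (IZR Y0 - eps) ltac:(rewrite minus_IZR; lra) (snd (fst e'))). exact Hl.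
    - pose proof (vlevel _ _ _ Hv' Hon') as Hl. apply (Hx0 _ Hl). }
  assert (HoA : Nat.Odd (length (filter (crosses (x0, y+eps)) E))).
  { destruct Ha as [[e' [Hin' Hon']]|Hodd]. exfalso; exact (Hoff (y+eps) (or_introl eq_refl) e' Hin' Hon'). apply Nat.odd_spec; exact Hodd. }
  assert (HoB : Nat.Odd (length (filter (crosses (x0, y-eps)) E))).
  { destruct Hb as [[e' [Hin' Hon']]|Hodd]. exfalso; exact (Hoff (y-eps) (or_intror eq_refl) e' Hin' Hon'). apply Nat.odd_spec; exact Hodd. }
  set (h := fun v : vertex => if Z.eq_dec (snd v) Y0 then (if Rlt_dec x0 (IZR (fst v)) then 1%nat else 0%nat) else 0%nat).
  set (c := fun e' : edge => (h (fst e') + h (snd e'))%nat).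
  set (f := fun e' : edge => if Z.eq_dec (fst (fst e')) (fst (snd e')) then c e' else 0%nat).
  set (b := fun e' : edge => if Z.eq_dec (fst (fst e')) (fst (snd e')) then 0%nat else c e').
  set (xr := fun e' : edge => Nat.add (if crosses (x0, y+eps) e' then 1%nat else 0%nat) (if crosses (x0, y-eps) e' then 1%nat else 0%nat)).
  assert (C1 : Nat.Even (sumF c E)) by apply sum_endpoints_even.
  assert (C2 : forall e', In e' E -> Nat.Even (xr e' + f e')).
  { intros e' Hin'. destruct (ortho_edge P e' HP Hin') as [Hne _].
    destruct e' as [[ux uy] [wx wy]]. simpl in Hne. unfold xr, f, c, h. simpl.
    destruct (Z.eq_dec ux wx) as [Heq|Hneq].
    - subst wx. assert (uy <> wy) by congruence.
      rewrite !crosses_vert. rewrite Hy'.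
      destruct (Rlt_dec x0 (IZR ux)) as [Hlt|Hlt].
      + apply Nat.even_spec.
        destruct (Rle_dec (IZR (Z.min uy wy)) (IZR Y0 + eps)) as [r1|r1];
        [apply (zle_plus _ _ _ He) in r1 | rewrite (zle_plus _ _ _ He) in r1];
        destruct (Rlt_dec (IZR Y0 + eps) (IZR (Z.max uy wy))) as [r2|r2];
        [apply (zlt_plus _ _ _ He) in r2 | rewrite (zlt_plus _ _ _ He) in r2 | |];
        destruct (Rle_dec (IZR (Z.min uy wy)) (IZR Y0 - eps)) as [r3|r3];
        try (apply (zle_minus _ _ _ He) in r3); try (rewrite (zle_minus _ _ _ He) in r3);
        destruct (Rlt_dec (IZR Y0 - eps) (IZR (Z.max uy wy))) as [r4|r4];
        try (apply (zlt_minus _ _ _ He) in r4); try (rewrite (zlt_minus _ _ _ He) in r4);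
        destruct (Z.eq_dec uy Y0); destruct (Z.eq_dec wy Y0);
        try reflexivity; exfalso; lia.
      + destruct (Z.eq_dec uy Y0); destruct (Z.eq_dec wy Y0); exists 0%nat; reflexivity.
    - unfold crosses; simpl. destruct (Z.eq_dec ux wx); [congruence|]. exists 0%nat; reflexivity. }
  assert (C3 : Nat.Odd (sumF b E)).
  { destruct (In_nth _ _ dummy_edge Hin) as [i [Hi Hei]].
    apply (sumF_one_odd b E dummy_edge i Hi).
    - rewrite Hei. destruct (ortho_edge P e HP Hin) as [Hne _].
      pose proof (strict_of_nonint e x0 y Hon Hx0) as Hs.
      destruct e as [[ux uy] [wx wy]]. unfold e_horizontal in Hh. simpl in *.
      unfold b, c, h; simpl. subst wy.
      destruct (Z.eq_dec ux wx) as [->|Hneq]; [congruence|].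
      unfold Y0. simpl. destruct (Z.eq_dec uy uy); [|congruence].
      unfold vx in Hs; simpl in Hs. unfold Rmin, Rmax in Hs.
      destruct (Rlt_dec x0 (IZR ux)); destruct (Rlt_dec x0 (IZR wx));
        destruct (Rle_dec (IZR ux) (IZR wx)); try lra; exists 0%nat; reflexivity.
    - intros j Hj Hji.
      assert (Hinj : In (nth j E dummy_edge) E) by (apply nth_In; auto).
      destruct (ortho_edge P _ HP Hinj) as [Hne [Hh'|Hv']].
      + assert (Hon' : forall xx, Rmin (vx (fst (nth j E dummy_edge))) (vx (snd (nth j E dummy_edge))) <= xx <=
                 Rmax (vx (fst (nth j E dummy_edge))) (vx (snd (nth j E dummy_edge))) ->
                 snd (fst (nth j E dummy_edge)) = Y0 -> on_edge (nth j E dummy_edge) (xx, y)).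
        { intros xx Hxx HY. split; simpl; auto. unfold vy. rewrite Hh' in *.
          rewrite HY, Hy'. apply between_min_max. lra. }
        assert (Hno : forall xx, on_edge (nth j E dummy_edge) (xx, y) -> xx = x0 -> False).
        { intros xx Hxx ->.
          assert (Hi2 : (i < length P)%nat) by (rewrite <- edges_length; exact Hi).
          assert (Hj2 : (j < length P)%nat) by (rewrite <- edges_length; exact Hj).
          apply (interior_touch P e i j (x0, y) HP Hei Hi2 Hj2 (not_eq_sym Hji) Hon Hxx).
          simpl. apply (strict_of_nonint e x0 y Hon Hx0). }
        clear Hei.
        destruct (nth j E dummy_edge) as [[ux uy] [wx wy]]. simpl in *.
        unfold e_horizontal in Hh'. simpl in Hh'. subst wy.
        unfold b, c, h; simpl.
        destruct (Z.eq_dec ux wx) as [->|Hneq]; [congruence|].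
        destruct (Z.eq_dec uy Y0) as [HY|HY]; [|exists 0%nat; reflexivity].
        unfold vx in Hon'; simpl in Hon'.
        destruct (Rlt_dec x0 (IZR ux)); destruct (Rlt_dec x0 (IZR wx));
          try (exists 1%nat; reflexivity); try (exists 0%nat; reflexivity); exfalso;
          apply (Hno x0); auto; apply Hon'; auto; apply between_min_max; lra.
      + unfold e_vertical in Hv'. unfold b. rewrite Hv'. destruct (Z.eq_dec _ _); [|congruence].
        exists 0%nat; reflexivity. }
  assert (Hsx : sumF xr E = Nat.add (length (filter (crosses (x0, y+eps)) E)) (length (filter (crosses (x0, y-eps)) E))).
  { unfold xr. rewrite sumF_add, !sumF_filter. reflexivity. }
  assert (Hxf : Nat.Even (sumF xr E + sumF f E)%nat).
  { rewrite <- (sumF_add xr f). apply sumF_even; auto. }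
  assert (Hcfb : sumF c E = (sumF f E + sumF b E)%nat).
  { rewrite <- (sumF_add f b). apply sumF_ext. intros a _. unfold f, b. destruct (Z.eq_dec _ _); lia. }
  destruct HoA as [k1 Hk1]. destruct HoB as [k2 Hk2]. destruct Hxf as [k3 Hk3].
  destruct C1 as [k4 Hk4]. destruct C3 as [k5 Hk5]. lia.
Qed.


Lemma eps_choice (a b : R) : 0 < a -> 0 < b -> exists eps, 0 < eps < 1 /\ eps <= a /\ eps <= b.
Proof.
  intros Ha Hb. exists (Rmin (1/2) (Rmin a b)).
  pose proof (Rmin_l (1/2) (Rmin a b)). pose proof (Rmin_r (1/2) (Rmin a b)).
  pose proof (Rmin_l a b). pose proof (Rmin_r a b).
  assert (0 < Rmin (1/2) (Rmin a b)) by (apply Rmin_glb_lt; [lra| apply Rmin_glb_lt; lra]).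
  repeat split; lra.
Qed.

Section Gap.
Variables (P : list vertex) (e1 e2 : edge) (xl xr yl yh dL dR : R).
Hypothesis HP : ortho_polygon P.
Hypothesis He1 : In e1 (edges P).
Hypothesis Hh1 : e_horizontal e1.
Hypothesis Hon1 : forall t, xl <= t <= xr -> on_edge e1 (t, yh).
Hypothesis Hmin1 : Rmin (vx (fst e1)) (vx (snd e1)) < xl.
Hypothesis Hmax1 : xr < Rmax (vx (fst e1)) (vx (snd e1)).
Hypothesis He2 : In e2 (edges P).
Hypothesis Hh2 : e_horizontal e2.
Hypothesis Hon2 : forall t, xl <= t <= xr -> on_edge e2 (t, yl).
Hypothesis Hmin2 : Rmin (vx (fst e2)) (vx (snd e2)) < xl.
Hypothesis Hmax2 : xr < Rmax (vx (fst e2)) (vx (snd e2)).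
Hypothesis Hylh : yl < yh.
Hypothesis Hxlr : xl <= xr.
Hypothesis HdL : 0 < dL.
Hypothesis HL : forall p, xl - dL <= fst p <= xl -> yl <= snd p <= yh -> inP P p.
Hypothesis HdR : 0 < dR.
Hypothesis HR : forall p, xr <= fst p <= xr + dR -> yl <= snd p <= yh -> inP P p.

Definition inZ (v : vertex) := xl <= vx v <= xr /\ yl < vy v < yh.

Lemma stepZ k : (k < length P)%nat -> inZ (nth k P dummy_vertex) -> inZ (nth (S k mod length P) P dummy_vertex).
Proof.
  intros Hk [Hx Hy].
  pose proof (edge_nth P k Hk) as Hek.
  set (u := nth k P dummy_vertex) in *. set (w := nth (S k mod length P) P dummy_vertex) in *.
  assert (Hin : In (u,w) (edges P)) by (rewrite <- Hek; apply nth_In; rewrite edges_length; auto).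
  destruct (ortho_edge P _ HP Hin) as [Hne [Hh|Hv]]; simpl in Hne.
  - assert (Hvy : vy w = vy u) by (unfold vy; unfold e_horizontal in Hh; simpl in Hh; rewrite Hh; reflexivity).
    destruct (eps_choice (vy u - yl) (yh - vy u)) as [eps [He [Ha Hb]]]; try lra.
    destruct (Rlt_le_dec xr (vx w)) as [Hgt|Hle].
    + exfalso.
      destruct (nonint_exists xr (Rmin (vx w) (xr + dR))) as [x0 [Hx0 Hni]]. { apply Rmin_glb_lt; lra. }
      pose proof (Rmin_l (vx w) (xr + dR)). pose proof (Rmin_r (vx w) (xr + dR)).
      apply (hedge_parity P (u,w) x0 (vy u) eps HP Hin Hh).
      * split; simpl; apply between_min_max; lra.
      * exact Hni.
      * exact He.
      * apply HR; simpl; lra.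
      * apply HR; simpl; lra.
    + destruct (Rlt_le_dec (vx w) xl) as [Hlt|Hge].
      * exfalso.
        destruct (nonint_exists (Rmax (vx w) (xl - dL)) xl) as [x0 [Hx0 Hni]].
        { unfold Rmax; destruct (Rle_dec _ _); lra. }
        pose proof (Rmax_l (vx w) (xl - dL)). pose proof (Rmax_r (vx w) (xl - dL)).
        apply (hedge_parity P (u,w) x0 (vy u) eps HP Hin Hh).
        -- split; simpl; apply between_min_max; lra.
        -- exact Hni.
        -- exact He.
        -- apply HL; simpl; lra.
        -- apply HL; simpl; lra.
      * split; [lra| rewrite Hvy; lra].
  - assert (Hvx : vx w = vx u) by (unfold vx; unfold e_vertical in Hv; simpl in Hv; rewrite Hv; reflexivity).
    assert (Hvk : e_vertical (nth k (edges P) dummy_edge)) by (rewrite Hek; exact Hv).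
    destruct (Rle_lt_dec yh (vy w)) as [Hge|Hlt].
    + exfalso. apply (no_touch P e1 k (vx u, yh) HP He1 Hh1 Hk Hvk).
      * apply Hon1; lra.
      * rewrite Hek. split; simpl; apply between_min_max; lra.
      * simpl. lra.
    + destruct (Rle_lt_dec (vy w) yl) as [Hle|Hgt].
      * exfalso. apply (no_touch P e2 k (vx u, yl) HP He2 Hh2 Hk Hvk).
        -- apply Hon2; lra.
        -- rewrite Hek. split; simpl; apply between_min_max; lra.
        -- simpl. lra.
      * split; lra.
Qed.

Lemma noZ k : (k < length P)%nat -> inZ (nth k P dummy_vertex) -> False.
Proof.
  intros Hk HZ. set (n := length P) in *.
  assert (Hn : n <> 0%nat) by lia.
  assert (Hall : forall m, inZ (nth ((k + m) mod n) P dummy_vertex)).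
  { induction m.
    - rewrite Nat.add_0_r, Nat.mod_small by lia. auto.
    - replace ((k + S m) mod n)%nat with (S ((k + m) mod n) mod n)%nat.
      + apply stepZ; auto. apply Nat.mod_upper_bound; auto.
      + rewrite <- Nat.add_1_r. rewrite Nat.add_mod_idemp_l by auto. f_equal. lia. }
  destruct (In_nth _ _ dummy_edge He1) as [i1 [Hi1 Hei1]]. rewrite edges_length in Hi1.
  specialize (Hall (n - k + i1)%nat).
  replace ((k + (n - k + i1)) mod n)%nat with i1 in Hall.
  2:{ replace (k + (n - k + i1))%nat with (i1 + 1 * n)%nat by lia. rewrite Nat.mod_add by auto.
      rewrite Nat.mod_small; auto. }
  rewrite edge_nth in Hei1 by auto.
  assert (Hyh : yh = vy (fst e1)) by (eapply hlevel; eauto; apply (Hon1 xl); lra).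
  rewrite <- Hei1 in Hyh. simpl in Hyh. destruct Hall. lra.
Qed.

Lemma gap_inP x y : xl <= x <= xr -> yl < y < yh -> inP P (x, y).
Proof.
  intros Hx Hy.
  destruct (classic (exists e, In e (edges P) /\ on_edge e (x,y))) as [Hex|Hnex]; [left; auto|].
  right.
  destruct (archimed xr) as [Hup1 Hup2]. set (U := up xr) in *.
  destruct (nonint_exists xr (Rmin (IZR U) (xr + dR))) as [x' [Hx' Hni]]. { apply Rmin_glb_lt; lra. }
  pose proof (Rmin_l (IZR U) (xr + dR)). pose proof (Rmin_r (IZR U) (xr + dR)).
  assert (HinP' : inP P (x', y)) by (apply HR; simpl; lra).
  assert (Hoff' : forall e, In e (edges P) -> ~ on_edge e (x', y)).
  { intros e Hin Hon. destruct (ortho_edge P e HP Hin) as [Hne [Hh|Hv]].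
    - destruct (eps_choice (y - yl) (yh - y)) as [eps [He [Ha Hb]]]; try lra.
      apply (hedge_parity P e x' y eps HP Hin Hh Hon Hni He); apply HR; simpl; lra.
    - apply (Hni (fst (fst e))). eapply vlevel; eauto. }
  destruct HinP' as [[e [Hin Hon]]|Hodd]; [exfalso; eapply Hoff'; eauto|].
  replace (filter (crosses (x,y)) (edges P)) with (filter (crosses (x', y)) (edges P)); [exact Hodd|].
  apply filter_ext_in. intros e Hin.
  destruct (In_nth _ _ dummy_edge Hin) as [k [Hk Hek]]. rewrite edges_length in Hk.
  pose proof (edge_nth P k Hk) as Hek'. rewrite Hek in Hek'.
  assert (Hk2 : (S k mod length P < length P)%nat) by (apply Nat.mod_upper_bound; lia).
  destruct e as [u w]. injection Hek' as Hu Hw.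
  unfold crosses. simpl fst; simpl snd.
  destruct (Z.eq_dec (fst u) (fst w)) as [Heq|]; [|reflexivity].
  assert (Hvx : vx w = vx u) by (unfold vx; rewrite Heq; reflexivity).
  destruct (Rlt_dec x' (vx u)) as [H1|H1]; destruct (Rlt_dec x (vx u)) as [H2|H2]; try reflexivity.
  - exfalso; lra.
  - destruct (Rle_dec (Rmin (vy u) (vy w)) y) as [H3|]; [|reflexivity].
    destruct (Rlt_dec y (Rmax (vy u) (vy w))) as [H4|]; [|reflexivity].
    exfalso.
    assert (Hc : vx u <= xr).
    { destruct (Rle_lt_dec (vx u) xr) as [|Hlt]; auto. exfalso. unfold vx in *.
      assert (Hlt2 : IZR (fst u) < IZR U) by lra. apply lt_IZR in Hlt2.
      assert (IZR (fst u) <= IZR (U - 1)) by (apply IZR_le; lia). rewrite minus_IZR in H5. lra. }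
    assert (Hvk : e_vertical (nth k (edges P) dummy_edge)) by (rewrite Hek; exact Heq).
    destruct (Rle_dec (vy u) (vy w)) as [Huw|Huw].
    + rewrite Rmax_right in H4 by lra. rewrite Rmin_left in H3 by lra.
      destruct (Rle_lt_dec yh (vy w)) as [Hge|Hlt].
      * apply (no_touch P e1 k (vx u, yh) HP He1 Hh1 Hk Hvk).
        -- apply Hon1; lra.
        -- rewrite Hek. split; simpl; apply between_min_max; lra.
        -- simpl. lra.
      * apply (noZ _ Hk2). rewrite <- Hw. split; lra.
    + rewrite Rmax_left in H4 by lra. rewrite Rmin_right in H3 by lra.
      destruct (Rle_lt_dec yh (vy u)) as [Hge|Hlt].
      * apply (no_touch P e1 k (vx u, yh) HP He1 Hh1 Hk Hvk).
        -- apply Hon1; lra.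
        -- rewrite Hek. split; simpl; apply between_min_max; lra.
        -- simpl. lra.
      * apply (noZ _ Hk). rewrite <- Hu. split; lra.
Qed.

End Gap.

Lemma corridor P e1 e2 xa xb yl yh Q p yq :
  ortho_polygon P -> In e1 (edges P) -> e_horizontal e1 -> In e2 (edges P) -> e_horizontal e2 ->
  (forall t, xa <= t <= xb -> on_edge e1 (t, yh)) -> (forall t, xa <= t <= xb -> on_edge e2 (t, yl)) ->
  valid_rect P Q -> in_rect Q (p, yq) -> xa < p < xb -> yl < yq < yh ->
  yl <= ry Q /\ ry Q + rh Q <= yh.
Proof.
  intros HP H1 Hh1 H2 Hh2 Hon1 Hon2 [Hw [Hh HQ]] [Hpx Hpy] Hp Hyq. simpl in Hpx, Hpy.
  destruct (nonint_exists (Rmax (rx Q) xa) (Rmin (rx Q + rw Q) xb)) as [x0 [Hx0 Hni]].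
  { unfold Rmax, Rmin; destruct (Rle_dec _ _); destruct (Rle_dec _ _); lra. }
  pose proof (Rmax_l (rx Q) xa). pose proof (Rmax_r (rx Q) xa).
  pose proof (Rmin_l (rx Q + rw Q) xb). pose proof (Rmin_r (rx Q + rw Q) xb).
  split.
  - destruct (Rle_lt_dec yl (ry Q)) as [|Hlt]; auto. exfalso.
    destruct (eps_choice (yl - ry Q) (ry Q + rh Q - yl)) as [eps [He [Ha Hb]]]; try lra.
    apply (hedge_parity P e2 x0 yl eps HP H2 Hh2 (Hon2 x0 ltac:(lra)) Hni He); apply HQ; split; simpl; lra.
  - destruct (Rle_lt_dec (ry Q + rh Q) yh) as [|Hlt]; auto. exfalso.
    destruct (eps_choice (yh - ry Q) (ry Q + rh Q - yh)) as [eps [He [Ha Hb]]]; try lra.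
    apply (hedge_parity P e1 x0 yh eps HP H1 Hh1 (Hon1 x0 ltac:(lra)) Hni He); apply HQ; split; simpl; lra.
Qed.


Definition rect_eq_dec (a b : rect) : {a = b} + {a <> b}.
Proof.
  destruct a as [a1 a2 a3 a4], b as [b1 b2 b3 b4].
  destruct (Req_EM_T a1 b1); [|right; congruence].
  destruct (Req_EM_T a2 b2); [|right; congruence].
  destruct (Req_EM_T a3 b3); [|right; congruence].
  destruct (Req_EM_T a4 b4); [|right; congruence].
  subst; left; reflexivity.
Defined.

Lemma min_exists (L : list rect) (Pr : rect -> Prop) :
  (exists Q, In Q L /\ Pr Q) -> exists Q, In Q L /\ Pr Q /\ forall Q', In Q' L -> Pr Q' -> rx Q <= rx Q'.
Proof.
  induction L as [|a t IH]; intros [Q [HQ HP]]; [destruct HQ|].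
  destruct (classic (exists Q, In Q t /\ Pr Q)) as [Hex|Hnex].
  - destruct (IH Hex) as [Q0 [H1 [H2 H3]]].
    destruct (classic (Pr a)) as [Ha|Ha].
    + destruct (Rle_lt_dec (rx a) (rx Q0)).
      * exists a. split; [left; auto|]. split; auto. intros Q' [<-|HQ'] HPQ'; [lra|]. specialize (H3 Q' HQ' HPQ'). lra.
      * exists Q0. split; [right; auto|]. split; auto. intros Q' [<-|HQ'] HPQ'; [lra|]. auto.
    + exists Q0. split; [right; auto|]. split; auto. intros Q' [<-|HQ'] HPQ'; [contradiction|]. auto.
  - destruct HQ as [<-|HQ]; [|exfalso; eauto].
    exists a. split; [left; auto|]. split; auto. intros Q' [<-|HQ'] HPQ'; [lra|]. exfalso; eauto.
Qed.

Definition meets (x y m : R) (Q : rect) := exists p, x < p < y /\ in_rect Q (p, m).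

Lemma cover1D (d m : R) : forall (n : nat) (L : list rect) (x y : R), (length L <= n)%nat -> x < y ->
  (forall p, x < p < y -> exists Q, In Q L /\ in_rect Q (p, m)) ->
  (forall Q, In Q L -> meets x y m Q -> rw Q <= d) ->
  exists T, NoDup T /\ incl T L /\ (forall Q, In Q T -> meets x y m Q /\ rx Q + rw Q <= y) /\
    y - x < (INR (length T) + 1) * d.
Proof.
  induction n as [|n IH]; intros L x y Hlen Hxy Hcov Hw.
  - destruct L; [|simpl in Hlen; lia].
    destruct (Hcov ((x+y)/2)) as [Q [[] _]]; lra.
  - destruct (min_exists L (meets x y m)) as [Q0 [HQ0 [Hm0 Hmin]]].
    { destruct (Hcov ((x+y)/2)) as [Q [HQ HQp]]; [lra|]. exists Q; split; auto. exists ((x+y)/2); split; auto; lra. }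
    set (l := rx Q0) in *. set (r := rx Q0 + rw Q0).
    assert (Hl : l <= x).
    { destruct (Rle_lt_dec l x) as [|Hlt]; auto. exfalso.
      set (p := x + Rmin (l - x) (y - x) / 2).
      pose proof (Rmin_l (l - x) (y - x)). pose proof (Rmin_r (l - x) (y - x)).
      assert (0 < Rmin (l - x) (y - x)) by (apply Rmin_glb_lt; lra).
      destruct (Hcov p) as [Q [HQ HQp]]; [unfold p; lra|].
      assert (rx Q <= p) by (destruct HQp as [[? ?] _]; simpl in *; lra).
      assert (l <= rx Q) by (apply Hmin; auto; exists p; split; auto; unfold p; lra).
      unfold p in *; lra. }
    assert (Hm0' := Hm0).
    destruct Hm0 as [p0 [Hp0 HQ0p]]. destruct HQ0p as [[Hp0a Hp0b] _]. simpl in Hp0a, Hp0b.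
    assert (Hw0 : rw Q0 <= d) by (apply Hw; auto).
    assert (Hr : x < r) by (unfold r; lra).
    destruct (Rle_lt_dec y r) as [Hyr|Hry].
    + destruct (Rle_lt_dec r y) as [Hry'|Hry'].
      * exists [Q0]. split; [constructor; [intros []|constructor]|].
        split; [intros q [<-|[]]; auto|].
        split; [intros q [<-|[]]; split; [exact Hm0'|unfold r, l in *; lra]|].
        simpl. unfold r, l in *. lra.
      * exists []. split; [constructor|]. split; [intros q []|]. split; [intros q []|]. simpl. unfold r, l in *. lra.
    + set (L' := remove rect_eq_dec Q0 L).
      assert (HL' : (length L' < length L)%nat) by (apply remove_length_lt; auto).
      destruct (IH L' r y) as [T' [HT1 [HT2 [HT3 HT4]]]]; auto.
      * lia.
      * intros p Hp. destruct (Hcov p) as [Q [HQ HQp]]; [lra|]. exists Q. split; auto.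
        apply in_in_remove; auto. intros ->. destruct HQp as [[_ ?] _]; simpl in *. unfold r, l in *. lra.
      * intros Q HQ [p [Hp HQp]]. apply in_remove in HQ. apply Hw; [tauto|]. exists p. split; auto. lra.
      * exists (Q0 :: T'). split; [constructor; auto|].
        { intros HinT. apply HT2 in HinT. apply (remove_In rect_eq_dec L Q0). exact HinT. }
        split; [intros q [<-|Hq]; auto; apply HT2 in Hq; apply in_remove in Hq; tauto|].
        split.
        { intros q [<-|Hq].
          - split; [exact Hm0'|unfold r, l in *; lra].
          - destruct (HT3 q Hq) as [[p [Hp Hqp]] Hq2]. split; auto. exists p. split; auto. lra. }
        simpl length. rewrite S_INR. unfold r, l in *. lra.
Qed.

Lemma ext_square_eq X q : 0 < rw X -> rw X = rh X -> ext X q -> q = X.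
Proof.
  intros Hw Hsq [H1 [H2 [i Hi]]].
  rewrite <- Hsq, Rmin_left in H1, H2 by lra.
  rewrite <- Hsq, Rmin_left in Hi by lra.
  destruct Hi as [[_ [Hi1 [Hi2 Hi3]]]|[Hc _]]; [|lra].
  assert (Hi0 : INR i < INR 1) by (simpl; apply Rmult_lt_reg_r with (rw X); lra).
  apply INR_lt in Hi0. assert (i = 0%nat) by lia. subst i. simpl in Hi2.
  destruct q, X; simpl in *. f_equal; lra.
Qed.

Lemma ext_self X : 0 < rw X -> rw X = rh X -> ext X X.
Proof.
  intros Hw Hsq. unfold ext. rewrite <- Hsq, Rmin_left by lra.
  split; auto. split; auto. exists 0%nat. left. simpl. repeat split; lra.
Qed.

Lemma mult_step (i k : nat) (t : R) : 0 < t -> INR i * t < INR k * t -> INR i * t + t <= INR k * t.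
Proof.
  intros Ht H. assert (INR i < INR k) by (apply Rmult_lt_reg_r with t; lra).
  apply INR_lt in H0. apply le_INR in H0. rewrite S_INR in H0.
  assert ((INR i + 1) * t <= INR k * t) by (apply Rmult_le_compat_r; lra). lra.
Qed.

Lemma ext_inside P X q : rec_pack P X -> ext X q ->
  0 < rw q /\ rw q = rh q /\ rx X <= rx q /\ rx q + rw q <= rx X + rw X /\ ry X <= ry q /\ ry q + rh q <= ry X + rh X.
Proof.
  intros [[Hw [Hh _]] [k [Hk Hkk]]] [H1 [H2 [i Hi]]].
  assert (Hk1 : 1 <= INR k) by (apply (le_INR 1 k) in Hk; simpl in Hk; lra).
  pose proof (pos_INR i) as Hi0.
  destruct Hi as [[Hc [Hi1 [Hi2 Hi3]]]|[Hc [Hi1 [Hi2 Hi3]]]].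
  - rewrite Rmin_right in H1, H2, Hi1, Hi2 by lra.
    assert (Hex : exists k', rw X = INR k' * rh X).
    { destruct Hkk as [Hkk|Hkk]; [eauto|]. exists 1%nat. simpl. nra. }
    destruct Hex as [k' Hk']. rewrite Hk' in Hi1.
    pose proof (mult_step i k' (rh X) Hh Hi1).
    assert (0 <= INR i * rh X) by (apply Rmult_le_pos; lra).
    repeat split; lra.
  - rewrite Rmin_left in H1, H2, Hi1, Hi3 by lra.
    assert (Hex : exists k', rh X = INR k' * rw X).
    { destruct Hkk as [Hkk|Hkk]; [|eauto]. exfalso. nra. }
    destruct Hex as [k' Hk']. rewrite Hk' in Hi1.
    pose proof (mult_step i k' (rw X) Hw Hi1).
    assert (0 <= INR i * rw X) by (apply Rmult_le_pos; lra).
    repeat split; lra.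
Qed.

Lemma overlap_of_inside A B q : 0 < rw q -> 0 < rh q ->
  rx A <= rx q -> rx q + rw q <= rx A + rw A -> ry A <= ry q -> ry q + rh q <= ry A + rh A ->
  rx B <= rx q -> rx q + rw q <= rx B + rw B -> ry B <= ry q -> ry q + rh q <= ry B + rh B ->
  overlap A B.
Proof.
  intros. exists (rx q + rw q / 2, ry q + rh q / 2). unfold in_rect_interior; simpl. repeat split; lra.
Qed.

Lemma cover_seg (n : nat) (s d x : R) : 0 < d -> (1 <= n)%nat -> s <= x <= s + INR n * d ->
  exists i, (i < n)%nat /\ s + INR i * d <= x <= s + INR i * d + d.
Proof.
  revert s. induction n as [|n IH]; intros s Hd Hn Hx; [lia|].
  destruct (Rle_lt_dec x (s + d)).
  - exists 0%nat. simpl. split; [lia|lra].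
  - destruct n as [|n]. { simpl in Hx. lra. }
    destruct (IH (s + d)) as [i [Hi Hxi]]; auto; [lia| rewrite S_INR in Hx; lra|].
    exists (S i). split; [lia|]. rewrite S_INR; lra.
Qed.

Lemma filter_split_length {A} (f : A -> bool) (l : list A) :
  (length (filter f l) + length (filter (fun a => negb (f a)) l))%nat = length l.
Proof. induction l; simpl; auto. destruct (f a); simpl; lia. Qed.

Lemma filter_notin_length (T L : list rect) : NoDup T -> incl T L ->
  (length (filter (fun q => if in_dec rect_eq_dec q T then false else true) L) + length T <= length L)%nat.
Proof.
  intros HT Hinc.
  pose proof (filter_split_length (fun q => if in_dec rect_eq_dec q T then true else false) L) as Hs.
  assert (Hle : (length T <= length (filter (fun q => if in_dec rect_eq_dec q T then true else false) L))%nat).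
  { apply NoDup_incl_length; auto. intros q Hq. apply filter_In. split; auto.
    destruct (in_dec rect_eq_dec q T); auto. }
  replace (filter (fun q => if in_dec rect_eq_dec q T then false else true) L)
    with (filter (fun a => negb (if in_dec rect_eq_dec a T then true else false)) L).
  - lia.
  - apply filter_ext. intros a. destruct (in_dec rect_eq_dec a T); reflexivity.
Qed.

Lemma nodup_length_le {A} dec (l : list A) : (length (nodup dec l) <= length l)%nat.
Proof.
  apply NoDup_incl_length; [apply NoDup_nodup|]. intros a Ha. apply nodup_In in Ha. exact Ha.
Qed.


Lemma msc_ext P (A B : rect -> Prop) : (forall q, A q <-> B q) -> min_square_cover P A -> min_square_cover P B.
Proof.
  intros Hab [[Hv Hc] [L [Hnd [Hiff Hmin]]]]. split; [split|].
  - intros sq Hsq. apply Hv, Hab, Hsq.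
  - intros p. rewrite Hc. split; intros [sq [H1 H2]]; exists sq; split; auto; apply Hab; auto.
  - exists L. split; auto. split; auto. intros sq. rewrite Hiff. apply Hab.
Qed.

Theorem lemma4p13 (P : list vertex) (eta : nat) (S Y : rect) (e1 e2 : edge)
    (Rs : rect -> Prop) :
  ortho_polygon P ->
  (1 <= eta)%nat ->
  maximal_square P S ->
  In e1 (edges P) -> e_horizontal e1 ->
  In e2 (edges P) -> e_horizontal e2 ->
  hseg_overlaps_edge (rx S) (rx S + rw S) (ry S + rh S) e1 ->
  hseg_overlaps_edge (rx S) (rx S + rw S) (ry S) e2 ->
  on_edge e1 (rx S + rw S, ry S + rh S) ->
  on_edge e2 (rx S + rw S, ry S) ->
  is_strip P Y -> rh Y < rw Y ->
  hseg_in_edge (rx Y) (rx Y + rw Y) (ry Y + rh Y) e1 ->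
  hseg_in_edge (rx Y) (rx Y + rw Y) (ry Y) e2 ->
  (rx Y + rw Y) - (rx S + rw S) > INR eta * rw S ->
  partial_solution P Rs ->
  Rs S ->
  (forall X, Rs X -> ~ overlap (right_pack S eta) X) ->
  partial_solution P (fun X => Rs X \/ X = right_pack S eta).
Proof.
  intros HP Heta HS He1 Hh1 He2 Hh2 Hov1 Hov2 Hc1 Hc2 HY HYw HY1 HY2 Hfar [M [HM HRsM]] HRsS Hnov.
  destruct HS as [[[HSw [HSh HSin]] HSsq] _]. unfold is_square in HSsq.
  destruct HY as [[[HYw0 [HYh0 HYin]] _] _].
  assert (Heta1 : 1 <= INR eta) by (apply (le_INR 1 eta) in Heta; simpl in Heta; lra).
  assert (Hetad : rw S <= INR eta * rw S) by nra.
  set (R := right_pack S eta) in *.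
  assert (HRx : rx R = (rx S + rw S)) by reflexivity.
  assert (HRy : ry R = ry S) by reflexivity.
  assert (HRw : rw R = INR eta * rw S) by reflexivity.
  assert (HRh : rh R = rw S) by reflexivity.
  pose proof (hlevel e1 _ _ Hh1 Hc1) as Hl1.
  pose proof (hlevel e2 _ _ Hh2 Hc2) as Hl2.
  assert (HYt : ry Y + rh Y = ry S + rh S).
  { rewrite Hl1. apply (hlevel e1 (rx Y)); auto. apply HY1. lra. }
  assert (HYb : ry Y = ry S).
  { rewrite Hl2. apply (hlevel e2 (rx Y)); auto. apply HY2. lra. }
  assert (HbY1 : on_edge e1 ((rx Y + rw Y), ry S + rh S)) by (rewrite <- HYt; apply HY1; lra).
  assert (HbY2 : on_edge e2 ((rx Y + rw Y), ry S)) by (rewrite <- HYb; apply HY2; lra).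
  destruct Hov1 as [a1 [b1 [Hab1 Hov1]]].
  destruct (Hov1 a1 ltac:(lra)) as [Ha1 Hoa1]. destruct (Hov1 b1 ltac:(lra)) as [Hb1 _].
  destruct Hov2 as [a2 [b2 [Hab2 Hov2]]].
  destruct (Hov2 a2 ltac:(lra)) as [Ha2 Hoa2]. destruct (Hov2 b2 ltac:(lra)) as [Hb2 _].
  set (xa := Rmax a1 a2).
  assert (Hxa1 : a1 <= xa) by apply Rmax_l. assert (Hxa2 : a2 <= xa) by apply Rmax_r.
  assert (Hxas : xa < (rx S + rw S)) by (unfold xa, Rmax; destruct (Rle_dec _ _); lra).
  assert (Hon1 : forall t, xa <= t <= (rx Y + rw Y) -> on_edge e1 (t, ry S + rh S)).
  { intros t Ht. apply (on_edge_conv e1 a1 (rx Y + rw Y)); auto. lra. }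
  assert (Hon2 : forall t, xa <= t <= (rx Y + rw Y) -> on_edge e2 (t, ry S)).
  { intros t Ht. apply (on_edge_conv e2 a2 (rx Y + rw Y)); auto. lra. }
  assert (Hmin1 : Rmin (vx (fst e1)) (vx (snd e1)) < (rx S + rw S)) by (destruct Hoa1 as [[? _] _]; simpl in *; lra).
  assert (Hmax1 : (rx Y + rw Y) <= Rmax (vx (fst e1)) (vx (snd e1))) by (destruct HbY1 as [[_ ?] _]; simpl in *; lra).
  assert (Hmin2 : Rmin (vx (fst e2)) (vx (snd e2)) < (rx S + rw S)) by (destruct Hoa2 as [[? _] _]; simpl in *; lra).
  assert (Hmax2 : (rx Y + rw Y) <= Rmax (vx (fst e2)) (vx (snd e2))) by (destruct HbY2 as [[_ ?] _]; simpl in *; lra).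
  assert (HRin : forall p, in_rect R p -> inP P p).
  { intros [px py] [Hpx Hpy]. rewrite HRx, HRw in Hpx. rewrite HRy, HRh in Hpy. simpl in Hpx, Hpy.
    destruct (Rle_lt_or_eq_dec _ _ (proj1 Hpy)) as [Hlo|Heq].
    2: { left. exists e2. split; auto. rewrite <- Heq. apply Hon2. lra. }
    destruct (Rle_lt_or_eq_dec _ _ (proj2 Hpy)) as [Hhi|Heq].
    2: { left. exists e1. split; auto. rewrite Heq, HSsq. apply Hon1. lra. }
    destruct (Rle_lt_dec (rx Y) px).
    - apply HYin. split; simpl; lra.
    - apply (gap_inP P e1 e2 (rx S + rw S) (rx Y) (ry S) (ry S + rh S) (rw S) (rw Y)); auto; try lra.
      + intros t Ht. apply Hon1. lra.
      + intros t Ht. apply Hon2. lra.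
      + intros p Hp1 Hp2. apply HSin. split;  lra.
      + intros p Hp1 Hp2. apply HYin. split; lra. }
  assert (HRvalid : valid_rect P R).
  { split; [rewrite HRw; nra|]. split; [rewrite HRh; lra|]. exact HRin. }
  assert (HRpack : rec_pack P R).
  { split; auto. exists eta. split; auto. }
  destruct HM as [HMrp [HMdis [[HUval HUcov] [L [HLnd [HLiff HLmin]]]]]].
  set (m := ry S + rw S / 2).
  assert (Hcor : forall Q, In Q L -> meets (rx S + rw S) ((rx S + rw S) + INR eta * rw S) m Q ->
     ry S <= ry Q /\ ry Q + rh Q <= ry S + rh S /\ rw Q = rh Q /\ 0 < rw Q).
  { intros Q HQ [p [Hp HQp]]. apply HLiff in HQ. destruct (HUval Q HQ) as [[Hqw [Hqh Hqin]] Hqsq].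
    destruct (corridor P e1 e2 xa (rx Y + rw Y) (ry S) (ry S + rh S) Q p m HP He1 Hh1 He2 Hh2 Hon1 Hon2
       (conj Hqw (conj Hqh Hqin)) HQp) as [H1 H2]; try (unfold m; lra).
    repeat split; auto. }
  destruct (cover1D (rw S) m (length L) L (rx S + rw S) ((rx S + rw S) + INR eta * rw S)) as [T [HTnd [HTinc [HTprop HTb]]]].
  { lia. }
  { nra. }
  { intros p Hp. assert (HpP : inP P (p, m)) by (apply HRin; split; simpl; rewrite ?HRx, ?HRw, ?HRy, ?HRh; unfold m; lra).
    apply HUcov in HpP. destruct HpP as [sq [Hsq Hin]]. exists sq. split; auto. apply HLiff; auto. }
  { intros Q HQ Hm. destruct (Hcor Q HQ Hm) as [? [? [? ?]]]. lra. }
  assert (HTlen : (eta <= length T)%nat).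
  { assert (INR eta * rw S < (INR (length T) + 1) * rw S) by lra.
    assert (INR eta < INR (Datatypes.S (length T))) by (rewrite S_INR; apply Rmult_lt_reg_r with (rw S); lra).
    apply INR_lt in H0. lia. }
  assert (HTS : ~ In S T).
  { intros HST. destruct (HTprop S HST) as [[p [Hp [Hpx _]]] _]. simpl in Hpx. lra. }
  assert (HTsub : forall Q, In Q T -> forall pt, in_rect Q pt -> in_rect S pt \/ in_rect R pt).
  { intros Q HQ pt [Hx Hy]. destruct (HTprop Q HQ) as [Hm Hr].
    destruct (Hcor Q (HTinc Q HQ) Hm) as [Hq1 [Hq2 [Hq3 Hq4]]].
    destruct Hm as [p [Hp [Hpx _]]]. simpl in Hpx.
    destruct (Rle_lt_dec (fst pt) (rx S + rw S)).
    - left. split;  lra.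
    - right. split; rewrite ?HRx, ?HRw, ?HRy, ?HRh; lra. }
  assert (HTnot : forall Q, In Q T -> forall X, Rs X -> ext X Q -> False).
  { intros Q HQ X HX HXQ. destruct (HTprop Q HQ) as [Hm Hr].
    destruct (Hcor Q (HTinc Q HQ) Hm) as [Hq1 [Hq2 [Hq3 Hq4]]].
    destruct Hm as [p [Hp [Hpx _]]]. simpl in Hpx.
    destruct (ext_inside P X Q (HMrp X (HRsM X HX)) HXQ) as [_ [_ [Hi1 [Hi2 [Hi3 Hi4]]]]].
    apply (Hnov X HX).
    set (px := (Rmax (rx Q) (rx S + rw S) + (rx Q + rw Q)) / 2).
    assert (Hpx1 : rx Q < px /\ (rx S + rw S) < px /\ px < rx Q + rw Q).
    { unfold px, Rmax. destruct (Rle_dec _ _); lra. }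
    exists (px, ry Q + rh Q / 2). unfold in_rect_interior; simpl.
    rewrite ?HRx, ?HRw, ?HRy, ?HRh. repeat split; lra. }
  set (extR := map (fun i => Rect ((rx S + rw S) + INR i * rw S) (ry S) (rw S) (rw S)) (seq 0 eta)).
  assert (HextR : forall q, ext R q <-> In q extR).
  { intros q. split.
    - intros [H1 [H2 [i Hi]]]. rewrite HRw, HRh in *. rewrite Rmin_right in H1, H2, Hi by lra.
      destruct Hi as [[_ [Hi1 [Hi2 Hi3]]]|[Hc _]]; [|lra].
      rewrite HRx, HRy in *.
      assert (Hi : INR i < INR eta) by (apply Rmult_lt_reg_r with (rw S); lra).
      apply INR_lt in Hi.
      apply in_map_iff. exists i. split; [|apply in_seq; lia].
      destruct q; simpl in *. subst. reflexivity.
    - intros Hq. apply in_map_iff in Hq. destruct Hq as [i [<- Hi]]. apply in_seq in Hi.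
      unfold ext. rewrite HRw, HRh, HRx, HRy, Rmin_right by lra. simpl.
      split; auto. split; auto. exists i. left. repeat split; try lra.
      apply Rmult_lt_compat_r; auto. apply lt_INR. lia. }
  assert (HextRin : forall q, In q extR -> valid_square P q /\ forall pt, in_rect q pt -> in_rect R pt).
  { intros q Hq. apply in_map_iff in Hq. destruct Hq as [i [<- Hi]]. apply in_seq in Hi.
    assert (Hsub : forall pt, in_rect (Rect ((rx S + rw S) + INR i * rw S) (ry S) (rw S) (rw S)) pt -> in_rect R pt).
    { intros pt [Hx Hy]. simpl in Hx, Hy.
      assert (0 <= INR i * rw S) by (apply Rmult_le_pos; [apply pos_INR|lra]).
      assert (INR i * rw S + rw S <= INR eta * rw S).
      { apply mult_step; auto. apply Rmult_lt_compat_r; auto. apply lt_INR. lia. }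
      split; rewrite ?HRx, ?HRw, ?HRy, ?HRh; lra. }
    split; auto. split; [|reflexivity]. split; [simpl; lra|]. split; [simpl; lra|].
    intros pt Hpt. apply HRin, Hsub, Hpt. }
  set (L1 := filter (fun q => if in_dec rect_eq_dec q T then false else true) L).
  set (L' := nodup rect_eq_dec (extR ++ L1)).
  assert (HL1 : forall q, In q L1 <-> In q L /\ ~ In q T).
  { intros q. unfold L1. rewrite filter_In. destruct (in_dec rect_eq_dec q T); intuition congruence. }
  assert (HL' : forall q, In q L' <-> In q extR \/ (In q L /\ ~ In q T)).
  { intros q. unfold L'. rewrite nodup_In, in_app_iff, HL1. tauto. }
  assert (HL'len : (length L' <= length L)%nat).
  { pose proof (nodup_length_le rect_eq_dec (extR ++ L1)).
    pose proof (filter_notin_length T L HTnd HTinc).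
    assert (HeR : length extR = eta) by (unfold extR; rewrite length_map, length_seq; reflexivity).
    rewrite length_app, HeR in H. fold L1 in H0. unfold L'. lia. }
  assert (HL'val : forall q, In q L' -> valid_square P q).
  { intros q Hq. apply HL' in Hq. destruct Hq as [Hq|[Hq _]].
    - apply HextRin; auto.
    - apply HUval, HLiff, Hq. }
  assert (HSL : In S L).
  { apply HLiff. exists S. split; [apply HRsM; auto|]. apply ext_self; auto. }
  assert (HL'cov : forall p, inP P p <-> exists sq, In sq L' /\ in_rect sq p).
  { intros p. split.
    - intros Hp. apply HUcov in Hp. destruct Hp as [sq [Hsq Hin]].
      apply HLiff in Hsq.
      destruct (in_dec rect_eq_dec sq T) as [HsT|HsT].
      + destruct (HTsub sq HsT p Hin) as [HpS|HpR].
        * exists S. split; auto. apply HL'. right. auto.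
        * destruct HpR as [Hx Hy]. rewrite HRx, HRw in Hx. rewrite HRy, HRh in Hy.
          destruct (cover_seg eta (rx S + rw S) (rw S) (fst p) HSw Heta Hx) as [i [Hi Hxi]].
          exists (Rect ((rx S + rw S) + INR i * rw S) (ry S) (rw S) (rw S)). split.
          -- apply HL'. left. apply in_map_iff. exists i. split; auto. apply in_seq. lia.
          -- split; simpl; lra.
      + exists sq. split; auto. apply HL'. right. auto.
    - intros [sq [Hsq Hin]]. destruct (HL'val sq Hsq) as [[_ [_ Hv]] _]. apply Hv, Hin. }
  assert (HmscL' : min_square_cover P (fun q => In q L')).
  { split; [split; auto|]. exists L'. split; [apply NoDup_nodup|]. split; [intros; tauto|].
    intros L'' Hnd Hcov. specialize (HLmin L'' Hnd Hcov). lia. }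
  set (M' := fun X => Rs X \/ X = R \/ (In X L' /\ ~ (exists Z, (Rs Z \/ Z = R) /\ ext Z X))).
  assert (Hthird : forall X q, In X L' -> ext X q -> q = X).
  { intros X q HX Hq. destruct (HL'val X HX) as [[Hw _] Hsq]. apply ext_square_eq; auto. }
  assert (HovR : forall X sq, Rs X -> ext X sq -> ext R sq -> False).
  { intros X sq HX H1 H2. apply (Hnov X HX).
    destruct (ext_inside P X sq (HMrp X (HRsM X HX)) H1) as [A1 [A2 [A3 [A4 [A5 A6]]]]].
    destruct (ext_inside P R sq HRpack H2) as [B1 [B2 [B3 [B4 [B5 B6]]]]].
    apply (overlap_of_inside R X sq); lra. }
  exists M'. split.
  2: { intros X [HX|HX]; [left; auto|right; left; auto]. }
  split; [|split].
  - intros X [HX|[HX|[HX _]]].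
    + apply HMrp, HRsM, HX.
    + subst X. exact HRpack.
    + destruct (HL'val X HX) as [Hv Hsq]. split; auto. exists 1%nat. split; auto. left. simpl.
      unfold is_square in Hsq. lra.
  - intros X Z sq HX HZ Hne HXs HZs.
    destruct HX as [HX|[HX|[HXL HXn]]]; destruct HZ as [HZ|[HZ|[HZL HZn]]].
    + exact (HMdis X Z sq (HRsM X HX) (HRsM Z HZ) Hne HXs HZs).
    + subst Z. exact (HovR X sq HX HXs HZs).
    + pose proof (Hthird Z sq HZL HZs). subst sq. apply HZn. exists X. split; auto.
    + subst X. exact (HovR Z sq HZ HZs HXs).
    + apply Hne. congruence.
    + pose proof (Hthird Z sq HZL HZs). subst sq. apply HZn. exists X. split; auto.
    + pose proof (Hthird X sq HXL HXs). subst sq. apply HXn. exists Z. split; auto.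
    + pose proof (Hthird X sq HXL HXs). subst sq. apply HXn. exists Z. split; auto.
    + pose proof (Hthird X sq HXL HXs). pose proof (Hthird Z sq HZL HZs). apply Hne. congruence.
  - apply (msc_ext P (fun q => In q L')); auto.
    intros q. split.
    + intros Hq. destruct (classic (exists Z, (Rs Z \/ Z = R) /\ ext Z q)) as [[Z [HZ HZq]]|Hn].
      * exists Z. split; auto. destruct HZ; [left|right; left]; auto.
      * exists q. split.
        -- right; right. split; auto.
        -- destruct (HL'val q Hq) as [[Hw _] Hsq]. apply ext_self; auto.
    + intros [X [[HX|[HX|[HX _]]] Hq]].
      * apply HL'. right. split.
        -- apply HLiff. exists X. split; auto.
        -- intros HqT. exact (HTnot q HqT X HX Hq).
      * subst X. apply HL'. left. apply HextR. auto.
      * rewrite (Hthird X q HX Hq). auto.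
Qed.
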